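(* Let $K\subset\mathbb{R}^{2d}\setminus D_0$ be compact. Then there exist $\sqrt2<r<r'$, constants $c_1,c_2,\epsilon>0$ and a function $R\in C_0^\infty(\mathbb{R}^{2d})$ vanishing in a neighbourhood of $D_0$ such that, as symmetric $2d\times 2d$ matrices, $$\nabla^2R(\tilde x)\ge c_1 1_K(\tilde x)-c_2 1_{C_{r,r'}\setminus D_\epsilon}(\tilde x)\quad\text{for all }\tilde x\in\mathbb{R}^{2d}.$$
   Context: $\tilde x=(x_1,x_2)\in\mathbb{R}^{2d}$ with $x_i\in\mathbb{R}^d$; $D_\epsilon=\{\tilde x:|x_1-x_2|\le\epsilon\}$ (so $D_0$ is the diagonal); $C_{r,r'}=\{\tilde x:r\le|\tilde x|\le r'\}$; $\nabla^2R$ is the Hessian, and the scalars on the right are multiples of the identity matrix. *)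

(* Defs.v *)
From HB Require Import structures.
From mathcomp Require Import all_boot all_order all_algebra.
From mathcomp Require Import all_classical all_reals all_analysis.
Set Implicit Arguments. Unset Strict Implicit. Unset Printing Implicit Defensive.
Import Order.TTheory GRing.Theory Num.Theory.
Import numFieldNormedType.Exports.
Local Open Scope classical_set_scope.
Local Open Scope ring_scope.

(* Points of R^n are row vectors 'rV[R]_n; R^{2d} is 'rV[R]_(d + d),
   with x = (x1, x2), x1 = lsubmx x, x2 = rsubmx x. *)

Definition enorm {R : realType} {n : nat} (v : 'rV[R]_n) : R :=
  Num.sqrt (\sum_(i < n) v ord0 i ^+ 2).

Definition ebasis {R : realType} {n : nat} (i : 'I_n) : 'rV[R]_n := delta_mx ord0 i.

Fixpoint pderivs {R : realType} {n : nat} (f : 'rV[R]_n -> R) (s : seq 'I_n)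
  : 'rV[R]_n -> R :=
  match s with
  | [::] => f
  | i :: s' => fun x => derive (pderivs f s') x (ebasis i)
  end.

Definition smooth {R : realType} {n : nat} (f : 'rV[R]_n -> R) : Prop :=
  forall s : seq 'I_n,
    continuous (pderivs f s) /\
    forall (i : 'I_n) (x : 'rV[R]_n), derivable (pderivs f s) x (ebasis i).

Definition compact_support {R : realType} {n : nat} (f : 'rV[R]_n -> R) : Prop :=
  exists M : R, forall x, M < enorm x -> f x = 0.

Definition hessian {R : realType} {n : nat} (f : 'rV[R]_n -> R) (x : 'rV[R]_n)
  : 'M[R]_n := \matrix_(i, j) pderivs f [:: i; j] x.

Definition psd_ge {R : realType} {n : nat} (A B : 'M[R]_n) : Prop :=
  forall v : 'rV[R]_n, 0 <= (v *m (A - B) *m v^T) ord0 ord0.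

Definition Dset {R : realType} (d : nat) (eps : R) : set 'rV[R]_(d + d) :=
  [set x | enorm (lsubmx x - rsubmx x) <= eps].

Definition Cann {R : realType} (d : nat) (r r' : R) : set 'rV[R]_(d + d) :=
  [set x | r <= enorm x <= r'].

Arguments Dset {R} d eps.
Arguments Cann {R} d r r'.

(* Main.v *)
Require Import Defs.
From HB Require Import structures.
From mathcomp Require Import all_boot all_order all_algebra.
From mathcomp Require Import all_classical all_reals all_analysis.
From mathcomp Require Import ring lra.
Set Implicit Arguments. Unset Strict Implicit. Unset Printing Implicit Defensive.
Import Order.TTheory GRing.Theory Num.Theory.
Import numFieldNormedType.Exports.
Local Open Scope classical_set_scope.
Local Open Scope ring_scope.
Section OneD.
Variable R : realType.
Definition psi (t : R) : R := if 0 < t then expR (- t^-1) else 0.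
Definition phi (m : nat) (t : R) : R := psi t * t^-1 ^+ m.

Lemma phi_le0 m t : t <= 0 -> phi m t = 0.
Proof. by move=> t0; rewrite /phi /psi ltNge t0 /= mul0r. Qed.

Lemma phi_gt0 m t : 0 < t -> phi m t = expR (- t^-1) * t^-1 ^+ m.
Proof. by move=> t0; rewrite /phi /psi t0. Qed.

Lemma phi_ge0 m t : 0 <= phi m t.
Proof.
have [t0|t0] := leP t 0; first by rewrite phi_le0.
by rewrite phi_gt0 // mulr_ge0 ?expR_ge0 // exprn_ge0 // invr_ge0 ltW.
Qed.

Lemma phi_pos m t : 0 < t -> 0 < phi m t.
Proof. by move=> t0; rewrite phi_gt0 // mulr_gt0 ?expR_gt0 // exprn_gt0 // invr_gt0. Qed.

Lemma phi_bound m t : 0 < t -> phi m t <= (m.+1)`!%:R * t.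
Proof.
move=> t0; rewrite phi_gt0 //; set u := t^-1.
have u0 : 0 < u by rewrite invr_gt0.
have e := expR_ge1Dxn m (ltW u0).
have fpos : 0 < (m.+1)`!%:R :> R by rewrite ltr0n fact_gt0.
have e2 : u ^+ m.+1 <= (m.+1)`!%:R * expR u.
  rewrite mulrC -ler_pdivrMr //; apply: le_trans e; rewrite lerDr //.
have eu := expR_gt0 u.
rewrite -[t]invrK -/u expRN.
have -> : (expR u)^-1 * u ^+ m = u ^+ m.+1 / (expR u * u).
  by rewrite exprS invfM; field; rewrite ?gt_eqF.
have -> : (m.+1)`!%:R * u^-1 = (m.+1)`!%:R * expR u / (expR u * u).
  by field; rewrite ?gt_eqF.
by rewrite ler_pM2r // invr_gt0 mulr_gt0.
Qed.

Lemma phi_absbound m t : `|phi m t| <= (m.+1)`!%:R * `|t|.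
Proof.
rewrite ger0_norm ?phi_ge0 //.
have [t0|t0] := leP t 0; first by rewrite phi_le0 // mulr_ge0.
by rewrite gtr0_norm // phi_bound.
Qed.

Lemma phi_cvg0 m : phi m x @[x --> (0:R)] --> 0.
Proof.
have Cp : 0 < (m.+1)`!%:R :> R by rewrite ltr0n fact_gt0.
apply/cvgrPdist_lt => e e0; near=> x.
rewrite sub0r normrN; apply: le_lt_trans (phi_absbound m x) _.
rewrite mulrC -ltr_pdivlMr //; near: x.
exists (e / (m.+1)`!%:R); first exact: divr_gt0.
by move=> y /=; rewrite sub0r normrN.
Unshelve. all: by end_near. Qed.

Lemma is_derive_inv (t : R) : t != 0 -> is_derive t 1 (fun y : R => y^-1) (- t ^- 2).
Proof.
move=> t0; have := @is_deriveV R id t 1 1 t0 (is_derive_id t 1).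
by rewrite /= scaler1.
Qed.

Lemma dphi_pos m (t : R) : 0 < t ->
  is_derive t 1 (phi m) (phi m.+2 t - m%:R * phi m.+1 t).
Proof.
move=> t0.
have tn0 : t != 0 by rewrite gt_eqF.
pose g := fun y : R => expR (- y^-1) * y^-1 ^+ m.
apply: (@near_eq_is_derive _ _ _ g).
  near=> y; rewrite /g phi_gt0 //; near: y; exact: lt_nbhsr.
have hi := is_derive_inv tn0.
have he : is_derive t 1 (fun y : R => expR (- y^-1)) (expR (- t^-1) * (t ^- 2)).
  have hn : is_derive t 1 (fun y : R => - y^-1) (t ^- 2).
    by have := is_deriveN hi; rewrite opprK.
  exact: (@is_derive1_comp _ expR (fun y => - y^-1) t (expR (- t^-1)) _ (is_derive_expR _) hn).
have hx : is_derive t 1 (fun y : R => y^-1 ^+ m) (m%:R * t^-1 ^+ m.-1 * (- t ^-2)).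
  by have := is_deriveX m hi; rewrite exprfctE.
have := is_deriveM he hx; rewrite mulrfctE /g => H.
apply: is_derive_eq.
rewrite !phi_gt0 //= /GRing.scale /=.
rewrite /GRing.scale /=.
case: m {hx H g} => [|m]; rewrite /= ?expr0 !exprS ?expr0; field; exact: tn0.
Unshelve. all: by end_near. Qed.

Lemma dphi m (t : R) : is_derive t 1 (phi m) (phi m.+2 t - m%:R * phi m.+1 t).
Proof.
have [t0|t0|->] := ltgtP t 0.
- have -> : phi m.+2 t - m%:R * phi m.+1 t = 0 by rewrite !phi_le0 ?ltW // mulr0 subr0.
  apply: (@near_eq_is_derive _ _ _ (cst 0)).
  near=> y; rewrite phi_le0 //; apply: ltW; near: y; exact: lt_nbhsl.
- exact: dphi_pos.
- rewrite !phi_le0 // mulr0 subr0.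
  have key : (fun h : R => h^-1 *: ((phi m \o shift 0) (h *: 1) - phi m 0)) = phi m.+1.
    apply/funext => h /=; rewrite (phi_le0 _ (lexx 0)) subr0 /GRing.scale /= mulr1 addr0.
    by rewrite /phi exprS mulrCA mulrA.
  have hc : phi m.+1 @ 0^' --> (0:R).
    exact: cvg_within_filter (phi_cvg0 m.+1).
  apply: DeriveDef; first by rewrite /derivable key; apply/cvg_ex; exists 0.
  by rewrite /derive key; apply: cvg_lim.
Unshelve. all: by end_near. Qed.

Lemma phi_continuous m : continuous (phi m).
Proof.
move=> t; apply: differentiable_continuous.
apply/derivable1_diffP; exact: (@ex_derive _ _ _ _ _ _ _ (dphi m t)).
Qed.
End OneD.

Section Chain.
Variables (R : realType) (n : nat).
Local Notation V := 'rV[R]_n.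

Lemma D1P (f : V -> R) x v : 'D_v f x = 'D_1 (fun h : R => f (h *: v + x)) 0.
Proof.
rewrite /derive; set g1 := fun h => h^-1 *: _; set g2 := fun h => h^-1 *: _.
suff -> : g1 = g2 by [].
by rewrite funeqE /g1 /g2 => h /=; rewrite addr0 scale0r add0r [_%:A]mulr1.
Qed.

Lemma is_derive_comp1 (f : V -> R) (g : R -> R) x v a b :
  is_derive (f x) 1 g a -> is_derive x v f b -> is_derive x v (g \o f) (a * b).
Proof.
move=> hg [hf <-].
pose gam := fun h : R => f (h *: v + x).
have g0 : gam 0 = f x by rewrite /gam scale0r add0r.
have hgam : is_derive (0:R) (1:R) gam ('D_v f x).
  apply: DeriveDef; first exact/(derivable1P _ _ _).1.
  by rewrite D1P.
rewrite -g0 in hg.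
have hc := is_derive1_comp hg hgam.
apply: DeriveDef.
  apply/derivable1P; exact: (@ex_derive _ _ _ _ _ _ _ hc).
by rewrite D1P; exact: (@derive_val _ _ _ _ _ _ _ hc).
Qed.

Lemma is_derive_poly2 (f : V -> R) x v a c :
  (forall h : R, f (h *: v + x) = f x + h * a + h ^+ 2 * c) -> is_derive x v f a.
Proof.
move=> hf.
have hcv : (fun h : R => h^-1 *: ((f \o shift x) (h *: v) - f x)) @ 0^' --> a.
  have e : {near 0^', (fun h : R => a + h * c) =1
              (fun h : R => h^-1 *: ((f \o shift x) (h *: v) - f x))}.
    near=> h => /=.
    have hn : h != 0 by near: h; exact: nbhs_dnbhs_neq.
    rewrite hf /GRing.scale /= expr2; field; exact: hn.
  apply: cvg_trans; first exact: (near_eq_cvg e).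
  have H : (fun h : R => a + h * c) @ (0:R) --> a + 0 * c.
    by apply: cvgD; [exact: cvg_cst | apply: cvgM; [exact: cvg_id | exact: cvg_cst]].
  rewrite mul0r addr0 in H; exact: cvg_within_filter H.
apply: DeriveDef; first by apply/cvg_ex; exists a.
exact: cvg_lim.
Unshelve. all: by end_near. Qed.
End Chain.

Section Syntax.
Variables (R : realType) (n : nat).
Local Notation V := 'rV[R]_n.

Inductive expr : Type :=
| ECst of R | ELin of 'I_n -> R | EQuad of 'I_n -> 'I_n -> R
| EAdd of expr & expr | EMul of expr & expr | EPhi of nat & expr | EInv of expr.

Fixpoint sem (e : expr) (x : V) : R :=
  match e with
  | ECst c => c
  | ELin b => \sum_(k < n) b k * x ord0 k
  | EQuad A => \sum_(k < n) \sum_(l < n) A k l * (x ord0 k * x ord0 l)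
  | EAdd e1 e2 => sem e1 x + sem e2 x
  | EMul e1 e2 => sem e1 x * sem e2 x
  | EPhi m e1 => phi m (sem e1 x)
  | EInv e1 => (sem e1 x)^-1
  end.

Fixpoint D (v : V) (e : expr) : expr :=
  match e with
  | ECst _ => ECst 0
  | ELin b => ECst (\sum_(k < n) b k * v ord0 k)
  | EQuad A => ELin (fun l => \sum_(k < n) (A k l + A l k) * v ord0 k)
  | EAdd e1 e2 => EAdd (D v e1) (D v e2)
  | EMul e1 e2 => EAdd (EMul (D v e1) e2) (EMul e1 (D v e2))
  | EPhi m e1 => EMul (EAdd (EPhi m.+2 e1) (EMul (ECst (- m%:R)) (EPhi m.+1 e1))) (D v e1)
  | EInv e1 => EMul (ECst (-1)) (EMul (D v e1) (EMul (EInv e1) (EInv e1)))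
  end.

Fixpoint wf (e : expr) : Prop :=
  match e with
  | EAdd e1 e2 | EMul e1 e2 => wf e1 /\ wf e2
  | EPhi _ e1 => wf e1
  | EInv e1 => (forall x, sem e1 x != 0) /\ wf e1
  | _ => True
  end.

Lemma wfD v e : wf e -> wf (D v e).
Proof.
elim: e => //=.
- by move=> e1 IH1 e2 IH2 [w1 w2]; have := IH1 w1; have := IH2 w2; tauto.
- by move=> e1 IH1 e2 IH2 [w1 w2]; have := IH1 w1; have := IH2 w2; tauto.
- by move=> m e1 IH w1; have := IH w1; tauto.
- by move=> e1 IH [h w1]; have := IH w1; tauto.
Qed.

Lemma sum2D (f g : 'I_n -> 'I_n -> R) :
  \sum_k \sum_l (f k l + g k l) = \sum_k \sum_l f k l + \sum_k \sum_l g k l.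
Proof. by rewrite -big_split /=; apply: eq_bigr => k _; rewrite big_split. Qed.

Lemma sum2Z (c : R) (f : 'I_n -> 'I_n -> R) :
  \sum_k \sum_l (c * f k l) = c * \sum_k \sum_l f k l.
Proof. by rewrite mulr_sumr; apply: eq_bigr => k _; rewrite mulr_sumr. Qed.

Lemma sem_derive e : wf e -> forall x v, is_derive x v (sem e) (sem (D v e) x).
Proof.
elim: e => /=.
- by move=> c _ x v; exact: is_derive_cst.
- move=> b _ x v; apply: (@is_derive_poly2 _ _ _ _ _ _ 0) => h.
  rewrite mulr0 addr0 mulr_sumr -big_split /=; apply: eq_bigr => k _.
  rewrite !mxE; ring.
- move=> A _ x v; apply: (@is_derive_poly2 _ _ _ _ _ _
     (\sum_k \sum_l A k l * (v ord0 k * v ord0 l))) => h.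
  transitivity (\sum_k \sum_l (A k l * (x ord0 k * x ord0 l) +
     (h * (A k l * (v ord0 k * x ord0 l)) + h * (A k l * (x ord0 k * v ord0 l))) +
     h ^+ 2 * (A k l * (v ord0 k * v ord0 l)))).
    by apply: eq_bigr => k _; apply: eq_bigr => l _; rewrite !mxE; ring.
  rewrite !sum2D !sum2Z -mulrDr; congr (_ + _ * _ + _).
  rewrite [X in X + _]exchange_big /= -sum2D.
  by apply: eq_bigr => l _; rewrite mulr_suml; apply: eq_bigr => k _; ring.
- move=> e1 IH1 e2 IH2 [w1 w2] x v.
  have := is_deriveD (IH1 w1 x v) (IH2 w2 x v); by rewrite addrfctE.
- move=> e1 IH1 e2 IH2 [w1 w2] x v.
  have := is_deriveM (IH1 w1 x v) (IH2 w2 x v); rewrite mulrfctE => H.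
  apply: is_derive_eq; rewrite /GRing.scale /=; ring.
- move=> m e1 IH w1 x v.
  have := is_derive_comp1 (dphi m (sem e1 x)) (IH w1 x v); rewrite compE => H.
  apply: is_derive_eq; ring.
- move=> e1 IH [hn w1] x v.
  have := is_derive_comp1 (is_derive_inv (hn x)) (IH w1 x v); rewrite compE => H.
  apply: is_derive_eq; field; exact: hn.
Qed.

Lemma cont_coord (k : 'I_n) : continuous (fun x : V => x ord0 k).
Proof. exact: coord_continuous. Qed.

Lemma cont_cst (c : R) (x : V) : (fun _ : V => c) @ x --> c.
Proof. exact: (@cvg_cst _ c _ _ (@nbhs_filter _ (x : V))). Qed.

Lemma cont_mul (f g : V -> R) (x : V) : f @ x --> f x -> g @ x --> g x ->
  (fun y => f y * g y) @ x --> f x * g x.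
Proof. move=> h1 h2; have h := @cvgM R _ _ (@nbhs_filter _ (x : V)) f g _ _ h1 h2; exact: h. Qed.

Lemma cont_add (f g : V -> R) (x : V) : f @ x --> f x -> g @ x --> g x ->
  (fun y => f y + g y) @ x --> f x + g x.
Proof. move=> h1 h2; have h := @cvgD R _ _ _ (@nbhs_filter _ (x : V)) f g _ _ h1 h2; exact: h. Qed.

Lemma cont_inv (f : V -> R) (x : V) : f x != 0 -> f @ x --> f x ->
  (fun y => (f y)^-1) @ x --> (f x)^-1.
Proof. move=> h0 h1; have h := @cvgV R _ _ (@nbhs_filter _ (x : V)) f _ h0 h1; exact: h. Qed.

Lemma cont_sum (I : Type) (r : seq I) (f : I -> V -> R) :
  (forall i, continuous (f i)) -> continuous (fun x => \sum_(i <- r) f i x).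
Proof.
move=> hf; elim: r => [|i r IH].
  rewrite (_ : (fun x => _) = (fun _ => 0)); first exact: cont_cst.
  by apply/funext => y; rewrite big_nil.
rewrite (_ : (fun x => _) = (fun x => f i x + \sum_(j <- r) f j x)).
  by move=> x; apply: cont_add; [exact: hf|exact: IH].
by apply/funext => y; rewrite big_cons.
Qed.

Lemma sem_continuous e : wf e -> continuous (sem e).
Proof.
elim: e => /=.
- by move=> c _; exact: cont_cst.
- move=> b _; apply: cont_sum => k x.
  by apply: cont_mul; [exact: cont_cst | exact: cont_coord].
- move=> A _; apply: cont_sum => k; apply: cont_sum => l x.
  apply: cont_mul; first exact: cont_cst.
  by apply: cont_mul; exact: cont_coord.
- move=> e1 IH1 e2 IH2 [w1 w2] x.
  exact: (cont_add (IH1 w1 x) (IH2 w2 x)).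
- move=> e1 IH1 e2 IH2 [w1 w2] x.
  exact: (cont_mul (IH1 w1 x) (IH2 w2 x)).
- move=> m e1 IH w1 x.
  have h := @cvg_comp _ _ _ (sem e1) (phi m) _ _ _ (IH w1 x) (@phi_continuous R m (sem e1 x)); exact: h.
- move=> e1 IH [hn w1] x.
  exact: (cont_inv (hn x) (IH w1 x)).
Qed.
End Syntax.

Section Smooth.
Variables (R : realType) (n : nat).
Local Notation V := 'rV[R]_n.

Fixpoint Ds (s : seq 'I_n) (e : expr R n) : expr R n :=
  match s with
  | [::] => e
  | i :: s' => D (ebasis i) (Ds s' e)
  end.

Lemma wfDs (e : expr R n) s : wf e -> wf (Ds s e).
Proof. by move=> w; elim: s => //= i s IH; exact: wfD. Qed.

Lemma pderivs_sem (e : expr R n) s : wf e -> pderivs (sem e) s = sem (Ds s e).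
Proof.
move=> w; elim: s => //= i s IH; apply/funext => x.
rewrite IH; have h := sem_derive (wfDs s w) x (ebasis i).
exact: (@derive_val _ _ _ _ _ _ _ h).
Qed.

Lemma smooth_sem (e : expr R n) : wf e -> smooth (sem e).
Proof.
move=> w s; rewrite pderivs_sem //; split; first exact: sem_continuous (wfDs s w).
move=> i x; have h := sem_derive (wfDs s w) x (ebasis i).
exact: (@ex_derive _ _ _ _ _ _ _ h).
Qed.

Lemma pderivs_local (f g : V -> R) (U : set V) : open U ->
  (forall y, U y -> f y = g y) -> forall s y, U y -> pderivs f s y = pderivs g s y.
Proof.
move=> oU hfg s; elim: s => [|i s IH] y Uy /=; first exact: hfg.
apply: near_eq_derive.
have hU : nbhs y U by apply: open_nbhs_nbhs; split.
by apply: filterS hU => z; exact: IH.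
Qed.

Lemma hessian_sem (e : expr R n) x : wf e ->
  hessian (sem e) x = \matrix_(i, j) sem (D (ebasis i) (D (ebasis j) e)) x.
Proof.
move=> w; apply/matrixP => i j; rewrite !mxE.
by rewrite (pderivs_sem [:: i; j] w).
Qed.
End Smooth.

Section Alg.
Variables (R : realType).

Lemma sum_delta n (f : 'I_n -> R) (i : 'I_n) : \sum_l (i == l)%:R * f l = f i.
Proof.
rewrite (bigD1 i) //= eqxx mul1r big1 ?addr0 // => l /negbTE.
by rewrite eq_sym => ->; rewrite mul0r.
Qed.

Lemma sum_deltar n (f : 'I_n -> R) (i : 'I_n) : \sum_l f l * (i == l)%:R = f i.
Proof. by rewrite -[RHS](sum_delta f i); apply: eq_bigr => l _; rewrite mulrC. Qed.

Lemma ebasisE n (i k : 'I_n) : (ebasis i : 'rV[R]_n) ord0 k = (i == k)%:R.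
Proof. by rewrite /ebasis mxE eqxx /= eq_sym. Qed.

Lemma sum2_prod n (f g : 'I_n -> R) :
  \sum_i \sum_j f i * g j = (\sum_i f i) * (\sum_j g j).
Proof. by rewrite mulr_suml; apply: eq_bigr => i _; rewrite mulr_sumr. Qed.

Lemma sum2_D n (f g : 'I_n -> 'I_n -> R) :
  \sum_k \sum_l (f k l + g k l) = \sum_k \sum_l f k l + \sum_k \sum_l g k l.
Proof. by rewrite -big_split /=; apply: eq_bigr => k _; rewrite big_split. Qed.

Lemma sum2_Z n (c : R) (f : 'I_n -> 'I_n -> R) :
  \sum_k \sum_l (c * f k l) = c * \sum_k \sum_l f k l.
Proof. by rewrite mulr_sumr; apply: eq_bigr => k _; rewrite mulr_sumr. Qed.

Lemma cauchy_schwarz n (w x : 'I_n -> R) :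
  (\sum_i w i * x i) ^+ 2 <= (\sum_i x i * x i) * (\sum_i w i * w i).
Proof.
have h : 0 <= \sum_i \sum_j (w i * x j - w j * x i) ^+ 2.
  by apply: sumr_ge0 => i _; apply: sumr_ge0 => j _; exact: sqr_ge0.
have e : \sum_i \sum_j (w i * x j - w j * x i) ^+ 2 =
  2 * ((\sum_i x i * x i) * (\sum_i w i * w i) - (\sum_i w i * x i) ^+ 2).
  transitivity (\sum_i \sum_j ((w i * w i) * (x j * x j) + (x i * x i) * (w j * w j)
                 - 2 * ((w i * x i) * (w j * x j)))).
    by apply: eq_bigr => i _; apply: eq_bigr => j _; ring.
  under eq_bigr do rewrite big_split /=.
  rewrite big_split /=.
  under eq_bigr do rewrite big_split /=.
  rewrite big_split /=.
  under [X in _ + _ + X]eq_bigr do rewrite sumrN -mulr_sumr.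
  rewrite sumrN -mulr_sumr !sum2_prod expr2; ring.
rewrite e in h; rewrite -subr_ge0; move: h; rewrite pmulr_rge0 //.
Qed.

Lemma quadformE n (w : 'rV[R]_n) (H : 'M[R]_n) (a : R) :
  (w *m (H - a%:M) *m w^T) ord0 ord0 =
  \sum_i \sum_j w ord0 i * w ord0 j * H i j - a * \sum_i w ord0 i * w ord0 i.
Proof.
rewrite !mxE.
transitivity (\sum_j \sum_i (w ord0 i * w ord0 j * H i j
                  - a * ((i == j)%:R * (w ord0 i * w ord0 j)))).
  apply: eq_bigr => j _; rewrite !mxE mulr_suml; apply: eq_bigr => i _.
  rewrite !mxE /=; case: (i == j) => /=; ring.
rewrite exchange_big /=.
under eq_bigr do rewrite sumrB.
rewrite sumrB; congr (_ - _).
rewrite mulr_sumr; apply: eq_bigr => i _.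
by rewrite -mulr_sumr (sum_delta (fun j => w ord0 i * w ord0 j)).
Qed.
End Alg.

Section Spec.
Variables (R : realType) (d : nat).
Local Notation n := (d + d).
Local Notation V := 'rV[R]_(d + d).

Definition mate (k : 'I_(d + d)) : 'I_(d + d) :=
  match fintype.split k with inl j => rshift d j | inr j => lshift d j end.

Lemma mateL j : mate (lshift d j) = rshift d j.
Proof. by rewrite /mate (unsplitK (inl _ j)). Qed.
Lemma mateR j : mate (rshift d j) = lshift d j.
Proof. by rewrite /mate (unsplitK (inr _ j)). Qed.

Definition MX (k l : 'I_(d + d)) : R := (k == l)%:R.
Definition MY (k l : 'I_(d + d)) : R := (k == l)%:R - (mate k == l)%:R.
Definition EX : expr R (d + d) := EQuad MX.
Definition EY : expr R (d + d) := EQuad MY.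

Lemma semEX (x : V) : sem EX x = \sum_k x ord0 k * x ord0 k.
Proof.
rewrite /=; apply: eq_bigr => k _.
by rewrite (sum_delta (fun l => x ord0 k * x ord0 l)).
Qed.

Lemma semEX_split (x : V) : sem EX x =
  \sum_(j < d) (x ord0 (lshift d j) ^+ 2 + x ord0 (rshift d j) ^+ 2).
Proof. by rewrite semEX big_split_ord /= -big_split /=; apply: eq_bigr => j _; rewrite !expr2. Qed.

Lemma semEY (x : V) : sem EY x =
  \sum_(j < d) (x ord0 (lshift d j) - x ord0 (rshift d j)) ^+ 2.
Proof.
rewrite /=.
transitivity (\sum_k (x ord0 k * x ord0 k - x ord0 k * x ord0 (mate k))).
  apply: eq_bigr => k _.
  transitivity (\sum_l ((k == l)%:R * (x ord0 k * x ord0 l)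
                 - (mate k == l)%:R * (x ord0 k * x ord0 l))).
    by apply: eq_bigr => l _; rewrite /MY mulrBl.
  rewrite sumrB (sum_delta (fun l => x ord0 k * x ord0 l)).
  by rewrite (sum_delta (fun l => x ord0 k * x ord0 l)).
rewrite big_split_ord /= -big_split /=; apply: eq_bigr => j _.
by rewrite mateL mateR; ring.
Qed.

Lemma EY_le (x : V) : sem EY x <= 2 * sem EX x.
Proof.
rewrite semEY semEX_split -subr_ge0 mulr_sumr -sumrB.
apply: sumr_ge0 => j _.
set a := x ord0 (lshift d j); set b := x ord0 (rshift d j).
have -> : 2 * (a ^+ 2 + b ^+ 2) - (a - b) ^+ 2 = (a + b) ^+ 2 by ring.
exact: sqr_ge0.
Qed.

Lemma EY_ge0 (x : V) : 0 <= sem EY x.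
Proof. by rewrite semEY; apply: sumr_ge0 => j _; exact: sqr_ge0. Qed.

Lemma EX_ge0 (x : V) : 0 <= sem EX x.
Proof. by rewrite semEX; apply: sumr_ge0 => j _; rewrite -expr2; exact: sqr_ge0. Qed.

Lemma enormX (x : V) : enorm x = Num.sqrt (sem EX x).
Proof. by rewrite /enorm semEX; congr Num.sqrt; apply: eq_bigr => k _; rewrite expr2. Qed.

Lemma enormY (x : V) : enorm (lsubmx x - rsubmx x) = Num.sqrt (sem EY x).
Proof. by rewrite /enorm semEY; congr Num.sqrt; apply: eq_bigr => k _; rewrite !mxE. Qed.

Lemma hess_prod (T P : expr R n) (u v x : V) :
  sem (D u (D v (EMul (EPhi 0 T) P))) x =
  (phi 4 (sem T x) - 2 * phi 3 (sem T x)) * sem (D u T) x * sem (D v T) x * sem P x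
  + phi 2 (sem T x) * sem (D u (D v T)) x * sem P x
  + phi 2 (sem T x) * (sem (D v T) x * sem (D u P) x + sem (D u T) x * sem (D v P) x)
  + phi 0 (sem T x) * sem (D u (D v P)) x.
Proof. rewrite /=; ring. Qed.

Lemma sum_hess (w a p : 'I_n -> R) (tt pp : 'I_n -> 'I_n -> R) (g0 g1 g2 P : R) :
  \sum_i \sum_j w i * w j * (g2 * a i * a j * P + g1 * tt i j * P
      + g1 * (a j * p i + a i * p j) + g0 * pp i j) =
  g2 * P * (\sum_i w i * a i) ^+ 2 + g1 * P * (\sum_i \sum_j w i * w j * tt i j)
  + 2 * g1 * (\sum_i w i * a i) * (\sum_i w i * p i)
  + g0 * (\sum_i \sum_j w i * w j * pp i j).
Proof.
transitivity (\sum_i \sum_j ((g2 * P) * ((w i * a i) * (w j * a j))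
   + (g1 * P) * (w i * w j * tt i j) + g1 * ((w i * p i) * (w j * a j))
   + g1 * ((w i * a i) * (w j * p j)) + g0 * (w i * w j * pp i j))).
  by apply: eq_bigr => i _; apply: eq_bigr => j _; ring.
by rewrite !sum2_D !sum2_Z !sum2_prod; ring.
Qed.
End Spec.

Lemma key_ineq (R : realType) (g0 g1 g2 P al be W X Yw ka la : R) :
  0 <= g0 -> 0 <= g1 -> 0 < g2 -> 1 <= P -> 0 <= Yw -> 0 <= ka -> 0 < la ->
  0 <= W -> be ^+ 2 <= X * W -> 4 * la * X * g1 ^+ 2 <= g0 * g2 ->
  la * g0 * W <= g2 * P * al ^+ 2 + g1 * P * (ka * 2 * Yw)
                 + 2 * g1 * al * (2 * la * be) + g0 * (la * 2 * W).
Proof.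
move=> h0 h1 h2 hP hY hk hl hW hb hc.
set E := g2 * al ^+ 2 + 4 * la * g1 * al * be + la * g0 * W.
have hE : 0 <= E.
  have hg : 0 <= g2 * E.
    have -> : g2 * E = (g2 * al + 2 * la * g1 * be) ^+ 2
                     + la * (g0 * g2 * W - 4 * la * g1 ^+ 2 * be ^+ 2) by rewrite /E; ring.
    apply: addr_ge0; first exact: sqr_ge0.
    apply: mulr_ge0; first exact: ltW.
    rewrite subr_ge0.
    have : 4 * la * g1 ^+ 2 * be ^+ 2 <= 4 * la * g1 ^+ 2 * (X * W).
      by apply: ler_wpM2l => //; apply: mulr_ge0; [apply: mulr_ge0; lra| exact: sqr_ge0].
    move=> /le_trans; apply.
    have -> : 4 * la * g1 ^+ 2 * (X * W) = (4 * la * X * g1 ^+ 2) * W by ring.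
    exact: ler_wpM2r.
  by rewrite pmulr_rge0 in hg.
have h3 : 0 <= (P - 1) * g2 * al ^+ 2.
  by apply: mulr_ge0; [apply: mulr_ge0; lra | exact: sqr_ge0].
have h4 : 0 <= g1 * P * (ka * 2 * Yw).
  apply: mulr_ge0; first by apply: mulr_ge0; lra.
  by apply: mulr_ge0 => //; apply: mulr_ge0 => //.
have -> : g2 * P * al ^+ 2 + g1 * P * (ka * 2 * Yw) + 2 * g1 * al * (2 * la * be)
   + g0 * (la * 2 * W) = (P - 1) * g2 * al ^+ 2 + g1 * P * (ka * 2 * Yw) + E + la * g0 * W
   by rewrite /E; ring.
lra.
Qed.

Section Inner.
Variables (R : realType) (d : nat).
Local Notation n := (d + d).
Local Notation V := 'rV[R]_(d + d).

Definition Tex (ka de : R) : expr R n := EAdd (EMul (ECst n ka) (@EY R d)) (ECst n (- (ka * de))).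
Definition Pex (la : R) : expr R n := EAdd (ECst n 1) (EMul (ECst n la) (@EX R d)).
Definition Fin (ka de la : R) : expr R n := EMul (EPhi 0 (Tex ka de)) (Pex la).

Lemma semD1_quad (A : 'I_n -> 'I_n -> R) i (x : V) :
  sem (D (ebasis i) (EQuad A)) x = \sum_l (A i l + A l i) * x ord0 l.
Proof.
rewrite /=; apply: eq_bigr => l _; congr (_ * _).
under eq_bigr do rewrite ebasisE.
exact: (sum_deltar (fun k => A k l + A l k)).
Qed.

Lemma semD2_quad (A : 'I_n -> 'I_n -> R) i j (x : V) :
  sem (D (ebasis i) (D (ebasis j) (EQuad A))) x = A j i + A i j.
Proof.
rewrite /=; under eq_bigr do rewrite ebasisE.
rewrite (sum_deltar (fun k => \sum_k0 (A k0 k + A k k0) * ebasis j ord0 k0)).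
under eq_bigr do rewrite ebasisE.
exact: (sum_deltar (fun k => A k i + A i k)).
Qed.

Lemma semT ka de (x : V) : sem (Tex ka de) x = ka * (sem (@EY R d) x - de).
Proof. rewrite /=; ring. Qed.
Lemma semDT ka de v (x : V) : sem (D v (Tex ka de)) x = ka * sem (D v (@EY R d)) x.
Proof. rewrite /=; ring. Qed.
Lemma semDDT ka de u v (x : V) :
  sem (D u (D v (Tex ka de))) x = ka * sem (D u (D v (@EY R d))) x.
Proof. rewrite /=; ring. Qed.
Lemma semP la (x : V) : sem (Pex la) x = 1 + la * sem (@EX R d) x.
Proof. by []. Qed.
Lemma semDP la v (x : V) : sem (D v (Pex la)) x = la * sem (D v (@EX R d)) x.
Proof. rewrite /=; ring. Qed.
Lemma semDDP la u v (x : V) :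
  sem (D u (D v (Pex la))) x = la * sem (D u (D v (@EX R d))) x.
Proof. rewrite /=; ring. Qed.

Lemma sumww_quad (A : 'I_n -> 'I_n -> R) (w : V) :
  \sum_i \sum_j w ord0 i * w ord0 j * (A j i + A i j) = 2 * sem (EQuad A) w.
Proof.
transitivity (\sum_i \sum_j (A j i * (w ord0 j * w ord0 i)) +
              \sum_i \sum_j (A i j * (w ord0 i * w ord0 j))).
  by rewrite -sum2_D; apply: eq_bigr => i _; apply: eq_bigr => j _; ring.
by rewrite [X in X + _]exchange_big /=; ring.
Qed.

Lemma interior_Q (ka de la : R) (x w : V) :
  0 < ka -> 0 < la -> 4 * la * sem (@EX R d) x <= 1 / 2 ->
  sem (Tex ka de) x <= 1 / 4 ->
  la * phi 0 (sem (Tex ka de) x) * (\sum_i w ord0 i * w ord0 i) <=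
  \sum_i \sum_j w ord0 i * w ord0 j * sem (D (ebasis i) (D (ebasis j) (Fin ka de la))) x.
Proof.
move=> hk hl hX ht.
under [X in _ <= X]eq_bigr => i _ do under eq_bigr => j _ do rewrite hess_prod.
rewrite sum_hess.
set t := sem (Tex ka de) x.
have htt : \sum_i \sum_j w ord0 i * w ord0 j * sem (D (ebasis i) (D (ebasis j) (Tex ka de))) x
    = ka * 2 * sem (@EY R d) w.
  under eq_bigr do under eq_bigr do rewrite semDDT semD2_quad.
  rewrite -mulrA -sumww_quad mulr_sumr; apply: eq_bigr => i _.
  by rewrite mulr_sumr; apply: eq_bigr => j _; ring.
have hpp : \sum_i \sum_j w ord0 i * w ord0 j * sem (D (ebasis i) (D (ebasis j) (Pex la))) x
    = la * 2 * (\sum_i w ord0 i * w ord0 i).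
  under eq_bigr do under eq_bigr do rewrite semDDP semD2_quad.
  rewrite -mulrA -(semEX w) -sumww_quad mulr_sumr; apply: eq_bigr => i _.
  by rewrite mulr_sumr; apply: eq_bigr => j _; ring.
have hp : \sum_i w ord0 i * sem (D (ebasis i) (Pex la)) x
    = 2 * la * (\sum_i w ord0 i * x ord0 i).
  have aux : forall i, \sum_l (@MX R d i l + @MX R d l i) * x ord0 l = 2 * x ord0 i.
    move=> i; transitivity (\sum_l (i == l)%:R * (2 * x ord0 l)).
      by apply: eq_bigr => l _; rewrite /MX [l == i]eq_sym; ring.
    exact: (sum_delta (fun l => 2 * x ord0 l)).
  under eq_bigr do rewrite semDP semD1_quad aux.
  by rewrite mulr_sumr; apply: eq_bigr => i _; ring.
rewrite htt hpp hp semP.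
have [t0|t0] := leP t 0.
  by rewrite !phi_le0 //; lra.
set W := \sum_i w ord0 i * w ord0 i.
set X := sem (@EX R d) x.
have hW : 0 <= W by apply: sumr_ge0 => i _; rewrite -expr2; exact: sqr_ge0.
have hX0 : 0 <= X by exact: EX_ge0.
rewrite !phi_gt0 //.
set u := t^-1; set e := expR (- u).
have hu : 4 <= u.
  have ht' : t <= 1 / 4 := ht.
  rewrite /u -(ler_pM2r t0) mulVf ?gt_eqF //; lra.
have he : 0 < e by exact: expR_gt0.
apply: (@key_ineq _ _ _ _ _ _ _ _ X).
- by rewrite expr0 mulr1; exact: ltW.
- by apply: mulr_ge0; [exact: ltW| apply: exprn_ge0; lra].
- have -> : e * u ^+ 4 - 2 * (e * u ^+ 3) = e * u ^+ 3 * (u - 2) by ring.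
  by apply: mulr_gt0; [apply: mulr_gt0 => //; apply: exprn_gt0; lra | lra].
- have := @mulr_ge0 _ la X (ltW hl) hX0; lra.
- exact: EY_ge0.
- exact: ltW.
- exact: hl.
- exact: hW.
- rewrite /W /X semEX; exact: (cauchy_schwarz (fun i => w ord0 i) (fun i => x ord0 i)).
- rewrite expr0 mulr1.
  have -> : e * (e * u ^+ 4 - 2 * (e * u ^+ 3)) = (e * e * u ^+ 3) * (u - 2) by ring.
  have -> : 4 * la * X * (e * u ^+ 2) ^+ 2 = (e * e * u ^+ 3) * (4 * la * X * u) by ring.
  apply: ler_wpM2l; first by apply: mulr_ge0; [apply: mulr_ge0; exact: ltW | apply: exprn_ge0; lra].
  have : 4 * la * X * u <= 1 / 2 * u by apply: ler_wpM2r => //; lra.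
  lra.
Qed.
End Inner.

Lemma phi0_mono (R : realType) (s t : R) : 0 < s -> s <= t -> phi 0 s <= phi 0 t.
Proof.
move=> s0 st; have t0 : 0 < t by exact: lt_le_trans st.
rewrite !phi_gt0 // !expr0 !mulr1 ler_expR lerN2.
by rewrite lef_pV2 ?posrE.
Qed.

Lemma prod_lb (R : realType) (a b h L : R) : `|h| <= L -> - (L * (a * a + b * b) / 2) <= a * b * h.
Proof.
move=> /[dup] hL; rewrite ler_norml => /andP[h1 h2].
have -> : a * b * h = (L + h) * (a + b) ^+ 2 / 4 + (L - h) * (a - b) ^+ 2 / 4
                       - (L * (a * a + b * b) / 2) by field.
have hA : 0 <= (L + h) * (a + b) ^+ 2 / 4.
  by apply: mulr_ge0; [apply: mulr_ge0; [lra|exact: sqr_ge0]|lra].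
have hB : 0 <= (L - h) * (a - b) ^+ 2 / 4.
  by apply: mulr_ge0; [apply: mulr_ge0; [lra|exact: sqr_ge0]|lra].
lra.
Qed.

Lemma coord_sq_le (R : realType) n (x : 'rV[R]_n) i :
  x ord0 i * x ord0 i <= \sum_k x ord0 k * x ord0 k.
Proof.
rewrite (bigD1 i) //= lerDl; apply: sumr_ge0 => k _; rewrite -expr2; exact: sqr_ge0.
Qed.

Lemma abs_le_sq (R : realType) (h : R) : `|h| <= 1 + h ^+ 2.
Proof.
have [h0|h0] := leP 0 h.
  by rewrite ger0_norm //; nra.
by rewrite ltr0_norm //; nra.
Qed.

Lemma sum_sq_le (R : realType) n (f : 'I_n -> 'I_n -> R) i j :
  f i j ^+ 2 <= \sum_k \sum_l f k l ^+ 2.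
Proof.
have h1 : f i j ^+ 2 <= \sum_l f i l ^+ 2.
  rewrite (bigD1 j) //= lerDl; apply: sumr_ge0 => k _; exact: sqr_ge0.
apply: le_trans h1 _.
rewrite [X in _ <= X](bigD1 i) //= lerDl; apply: sumr_ge0 => k _; apply: sumr_ge0 => l _; exact: sqr_ge0.
Qed.

Lemma box_bound (R : realType) n (w : 'rV[R]_n) (H : 'I_n -> 'I_n -> R) (L : R) :
  (forall i j, `|H i j| <= L) ->
  - (L * n%:R * \sum_i w ord0 i * w ord0 i) <= \sum_i \sum_j w ord0 i * w ord0 j * H i j.
Proof.
move=> hH.
have e : \sum_i \sum_j (- (L * (w ord0 i * w ord0 i + w ord0 j * w ord0 j) / 2))
   = - (L * n%:R * \sum_i w ord0 i * w ord0 i).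
  transitivity (- (L / 2) * (\sum_(i < n) \sum_(j < n) (w ord0 i * w ord0 i) + \sum_(i < n) \sum_(j < n) (w ord0 j * w ord0 j))).
    rewrite -sum2_D -sum2_Z; apply: eq_bigr => i _; apply: eq_bigr => j _; ring.
  rewrite exchange_big /=.
  have -> : \sum_(i < n) \sum_(j < n) w ord0 j * w ord0 j = n%:R * \sum_i w ord0 i * w ord0 i.
    by rewrite sumr_const card_ord mulr_natl.
  by field.
rewrite -e; apply: ler_sum => i _; apply: ler_sum => j _; exact: prod_lb.
Qed.

Section Main.
Variables (R : realType) (d : nat).
Local Notation n := (d + d).
Local Notation V := 'rV[R]_(d + d).

Definition Aa (r'2 : R) : expr R n := EPhi 0 (EAdd (ECst n r'2) (EMul (ECst n (-1)) (EX R d))).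
Definition Bb (r2 : R) : expr R n := EPhi 0 (EAdd (EX R d) (ECst n (- r2))).
Definition Fe (ka de la r2 r'2 : R) : expr R n :=
  EMul (@Fin R d ka de la) (EMul (Aa r'2) (EInv (EAdd (Aa r'2) (Bb r2)))).

Lemma semAa r'2 (x : V) : sem (Aa r'2) x = phi 0 (r'2 - sem (EX R d) x).
Proof. by rewrite /= mulN1r. Qed.
Lemma semBb r2 (x : V) : sem (Bb r2) x = phi 0 (sem (EX R d) x - r2).
Proof. by []. Qed.

Lemma AB_pos r2 r'2 (x : V) : r2 < r'2 -> 0 < sem (Aa r'2) x + sem (Bb r2) x.
Proof.
move=> hr; rewrite semAa semBb.
have [hx|hx] := ltP (sem (EX R d) x) r'2.
  by apply: ltr_pwDl; [apply: phi_pos; lra | exact: phi_ge0].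
by apply: ltr_pwDr; [apply: phi_pos; lra | exact: phi_ge0].
Qed.

Lemma wfFe ka de la r2 r'2 : r2 < r'2 -> wf (Fe ka de la r2 r'2).
Proof.
move=> hr; have hx : forall x : V, sem (EAdd (Aa r'2) (Bb r2)) x != 0.
  by move=> x; rewrite gt_eqF //; exact: AB_pos.
by rewrite /=; do !split => //; exact: hx.
Qed.

Lemma semFe ka de la r2 r'2 (x : V) : sem (Fe ka de la r2 r'2) x =
  sem (@Fin R d ka de la) x * (sem (Aa r'2) x * (sem (Aa r'2) x + sem (Bb r2) x)^-1).
Proof. by []. Qed.

Lemma F_in ka de la r2 r'2 (x : V) : r2 < r'2 -> sem (EX R d) x < r2 ->
  sem (Fe ka de la r2 r'2) x = sem (@Fin R d ka de la) x.
Proof.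
move=> hr hx; rewrite semFe semBb phi_le0; last by lra.
rewrite addr0 mulfV ?mulr1 //; rewrite semAa gt_eqF //; apply: phi_pos; lra.
Qed.

Lemma F_out ka de la r2 r'2 (x : V) : r'2 < sem (EX R d) x ->
  sem (Fe ka de la r2 r'2) x = 0.
Proof. by move=> hx; rewrite semFe semAa phi_le0 ?mul0r ?mulr0 //; lra. Qed.

Lemma F_D ka de la r2 r'2 (x : V) : 0 < ka -> sem (EY R d) x < de ->
  sem (Fe ka de la r2 r'2) x = 0.
Proof.
move=> hk hy; rewrite semFe.
have -> : sem (@Fin R d ka de la) x = 0.
  rewrite /Fin /= phi_le0 ?mul0r //.
  have : ka * sem (EY R d) x < ka * de by rewrite ltr_pM2l.
  rewrite /=; lra.
by rewrite mul0r.
Qed.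

Lemma hess_local (e g : expr R n) (U : set V) (x : V) i j : wf e -> wf g -> open U -> U x ->
  (forall y, U y -> sem e y = sem g y) ->
  sem (D (ebasis i) (D (ebasis j) e)) x = sem (D (ebasis i) (D (ebasis j) g)) x.
Proof.
move=> we wg oU Ux h.
have := pderivs_local oU h [:: i; j] Ux.
by rewrite (pderivs_sem [:: i; j] we) (pderivs_sem [:: i; j] wg).
Qed.

Lemma open_lt_fun (f : V -> R) (a : R) : continuous f -> open [set y | f y < a].
Proof.
move=> cf; have := @open_comp _ _ f [set z | z < a] _ (@open_lt _ a); apply.
by move=> y _; exact: cf.
Qed.

Lemma open_gt_fun (f : V -> R) (a : R) : continuous f -> open [set y | a < f y].
Proof.
move=> cf; have := @open_comp _ _ f [set z | a < z] _ (@open_gt _ a); apply.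
by move=> y _; exact: cf.
Qed.
End Main.

Unset Implicit Arguments.
Theorem lemma5p3 (R : realType) (d : nat) (K : set 'rV[R]_(d + d)) :
  compact K -> K `<=` ~` Dset d 0 ->
  exists (r r' c1 c2 eps : R) (F : 'rV[R]_(d + d) -> R),
    [/\ Num.sqrt 2 < r, r < r', 0 < c1, 0 < c2 & 0 < eps] /\
    smooth F /\ compact_support F /\
    (exists U : set 'rV[R]_(d + d),
        open U /\ Dset d 0 `<=` U /\ (forall x, U x -> F x = 0)) /\
    (forall x : 'rV[R]_(d + d),
        psd_ge (hessian F x)
          ((c1 * indic K x - c2 * indic (Cann d r r' `\` Dset d eps) x)%:M)).
Proof.
move=> cK KD.
set Xf := sem (EX R d); set Yf := sem (EY R d).
have cX : continuous Xf by exact: (@sem_continuous R (d + d) (EX R d)).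
have cY : continuous Yf by exact: (@sem_continuous R (d + d) (EY R d)).
have [bX [bX0 hbX]] : exists bX : R, 0 <= bX /\ forall x, K x -> Xf x <= bX.
  have [K0|K0] := pselect (K !=set0).
    have [c cKc hc] := compact_EVT_max K0 cK (@continuous_subspaceT _ _ K Xf cX).
    exists (Xf c); split; first exact: EX_ge0.
    by move=> x Kx; apply: hc; rewrite inE.
  by exists 0; split => // x Kx; exfalso; apply: K0; exists x.
have [de1 [de10 hde1]] : exists de1 : R, 0 < de1 /\ forall x, K x -> de1 <= Yf x.
  have [K0|K0] := pselect (K !=set0).
    have [c cKc hc] := compact_EVT_min K0 cK (@continuous_subspaceT _ _ K Yf cY).
    exists (Yf c); split; last by move=> x Kx; apply: hc; rewrite inE.
    have := KD c (set_mem cKc); rewrite /Dset /= enormY => h.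
    rewrite -sqrtr_gt0; rewrite ltNge; exact/negP.
  by exists 1; split => // x Kx; exfalso; apply: K0; exists x.
pose r2 := bX + 3; pose r'2 := r2 + 1.
have r2p : 3 <= r2 by rewrite /r2; lra.
have hr : r2 < r'2 by rewrite /r'2; lra.
pose ka : R := 1 / (8 * r2); pose la := ka; pose de := de1 / 2.
have kap : 0 < ka by rewrite /ka; apply: divr_gt0 => //; lra.
have dep : 0 < de by rewrite /de; lra.
pose E := @Fe R d ka de la r2 r'2.
have wE : wf E := @wfFe R d ka de la r2 r'2 hr.
pose F := sem E.
pose H := fun (x : 'rV[R]_(d + d)) (i j : 'I_(d + d)) => sem (D (ebasis i) (D (ebasis j) E)) x.
have wH : forall i j, wf (D (ebasis i) (D (ebasis j) E)) by move=> i j; do 2 apply: wfD.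
pose S := fun x => \sum_i \sum_j H x i j ^+ 2.
have key : forall i j, continuous (fun y => H y i j ^+ 2).
  move=> i j; rewrite (_ : (fun y => H y i j ^+ 2) = (fun y => H y i j * H y i j)).
    by move=> y; apply: cont_mul; exact: (sem_continuous (wH i j)).
  by apply/funext => y; rewrite expr2.
have cS : continuous S.
  by apply: cont_sum => i; apply: cont_sum => j; exact: key.
pose c := r'2 + 1.
pose B := [set v : 'rV[R]_(d + d) | forall i, `[(- c), c]%classic (v ord0 i)].
have cB : compact B.
  exact: (@rV_compact _ _ (fun=> `[(- c), c]%classic) (fun=> @segment_compact _ _ _)).
have B0 : B !=set0.
  exists 0 => i /=; rewrite mxE in_itv /=; apply/andP; split; rewrite /c /r'2 /r2; lra.
have [Sb hSb] : exists Sb, forall x, B x -> S x <= Sb.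
  have [c0 _ hc] := compact_EVT_max B0 cB (@continuous_subspaceT _ _ B S cS).
  by exists (S c0) => x Bx; apply: hc; rewrite inE.
have Sb0 : 0 <= Sb.
  have [v Bv] := B0; apply: le_trans (hSb v Bv).
  by apply: sumr_ge0 => i _; apply: sumr_ge0 => j _; exact: sqr_ge0.
have hB : forall x, Xf x <= r'2 -> B x.
  move=> x hx i; rewrite /= in_itv /=.
  have := coord_sq_le x i; rewrite -semEX -/Xf => hxi.
  have hc : r'2 + 1 = c by [].
  apply/andP; split; nra.
pose L := 1 + Sb.
have hHb : forall x, Xf x <= r'2 -> forall i j, `|H x i j| <= L.
  move=> x hx i j; apply: le_trans (abs_le_sq _) _.
  rewrite lerD2l; apply: le_trans (hSb x (hB x hx)).
  exact: (sum_sq_le (fun i j => H x i j)).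
pose c2 := L * (d + d)%:R + 1.
have c2p : 0 < c2.
  have : 0 <= L * (d + d)%:R by apply: mulr_ge0; [rewrite /L; lra | exact: ler0n].
  by rewrite /c2; lra.
pose c1 := la * phi 0 (ka * de).
have c1p : 0 < c1 by apply: mulr_gt0 => //; apply: phi_pos; exact: mulr_gt0.
pose r := Num.sqrt r2; pose r' := Num.sqrt r'2; pose eps := Num.sqrt de / 2.
exists r, r', c1, c2, eps, F.
split.
  split => //.
  - by rewrite ltr_sqrt; lra.
  - by rewrite ltr_sqrt //; lra.
  - by apply: divr_gt0 => //; rewrite sqrtr_gt0.
split; first exact: smooth_sem.
split.
  exists r' => x; rewrite enormX => hx.
  have hX0 : 0 < Xf x.
    by rewrite -sqrtr_gt0; apply: le_lt_trans hx; exact: sqrtr_ge0.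
  by rewrite ltr_sqrt // in hx; exact: F_out.
split.
  exists [set x | Yf x < de]; split; first exact: open_lt_fun.
  split.
    move=> x; rewrite /Dset /= enormY => h.
    have : Num.sqrt (Yf x) == 0 by rewrite eq_le h sqrtr_ge0.
    rewrite sqrtr_eq0 => h2; lra.
  by move=> x hx; exact: F_D.
move=> x w; rewrite /psd_ge quadformE.
have hHess : forall i j, hessian F x i j = H x i j.
  by move=> i j; rewrite /F hessian_sem // mxE.
under eq_bigr do under eq_bigr do rewrite hHess.
set W := \sum_i w ord0 i * w ord0 i.
have hW : 0 <= W by apply: sumr_ge0 => i _; rewrite -expr2; exact: sqr_ge0.
have hKX : forall y, K y -> Xf y < r2 by move=> y Ky; have := hbX y Ky; rewrite /r2; lra.
have [hx|hx] := ltP (Xf x) r2.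
-
  have hloc : forall i j, H x i j = sem (D (ebasis i) (D (ebasis j) (@Fin R d ka de la))) x.
    move=> i j; apply: (@hess_local R d _ _ [set y | Xf y < r2]) => //.
    + exact: open_lt_fun.
    + by move=> y hy; exact: F_in.
  under eq_bigr do under eq_bigr do rewrite hloc.
  have h4 : 4 * la * Xf x <= 1 / 2.
    have r2n : r2 != 0 by rewrite gt_eqF //; lra.
    rewrite (_ : 4 * la * Xf x = (Xf x / r2) / 2); last by rewrite /la /ka; field.
    have : Xf x / r2 <= 1 by rewrite ler_pdivrMr ?mul1r; lra.
    lra.
  have ht : sem (@Tex R d ka de) x <= 1 / 4.
    have r2n : r2 != 0 by rewrite gt_eqF //; lra.
    rewrite semT; have hY : sem (EY R d) x <= 2 * Xf x := EY_le x.
    have : ka * (sem (EY R d) x - de) <= ka * (2 * Xf x) by rewrite ler_pM2l //; lra.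
    rewrite (_ : ka * (2 * Xf x) = (Xf x / r2) / 4); last by rewrite /ka; field.
    have : Xf x / r2 <= 1 by rewrite ler_pdivrMr ?mul1r; lra.
    lra.
  have hQ := @interior_Q R d ka de la x w kap kap h4 ht.
  have hnC : x \notin (Cann d r r' `\` Dset d eps).
    apply/negP => /set_mem [/andP [hC _] _].
    move: hC; rewrite /r enormX ler_sqrt; last exact: EX_ge0.
    rewrite -/Xf; lra.
  rewrite /indic (negbTE hnC) mulr0 subr0.
  have [xK|xK] := boolP (x \in K).
    rewrite (_ : (true%:R : R) = 1) // mulr1; rewrite -/W in hQ.
    have hle : c1 <= la * phi 0 (sem (@Tex R d ka de) x).
      rewrite /c1 ler_pM2l //; apply: phi0_mono; first exact: mulr_gt0.
      rewrite semT ler_pM2l //.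
      have : de1 <= sem (EY R d) x := hde1 x (set_mem xK); rewrite /de; lra.
    have : c1 * W <= la * phi 0 (sem (@Tex R d ka de) x) * W by exact: ler_wpM2r.
    lra.
  rewrite (_ : (false%:R : R) = 0) // mulr0 mul0r subr0; rewrite -/W in hQ.
  apply: le_trans hQ; apply: mulr_ge0 => //; apply: mulr_ge0; [exact: ltW|exact: phi_ge0].
-
  have xK : x \notin K by apply/negP => /set_mem /hKX; lra.
  rewrite /indic (negbTE xK) (_ : (false%:R : R) = 0) // mulr0 sub0r.
  set b := (x \in _)%:R.
  have hb : 0 <= b by exact: ler0n.
  have hzero : (forall i j, H x i j = 0) ->
      0 <= \sum_i \sum_j w ord0 i * w ord0 j * H x i j - - (c2 * b) * W.
    move=> hz.
    have -> : \sum_i \sum_j w ord0 i * w ord0 j * H x i j = 0.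
      by apply: big1 => i _; apply: big1 => j _; rewrite hz mulr0.
    have : 0 <= c2 * b * W by apply: mulr_ge0 => //; apply: mulr_ge0 => //; exact: ltW.
    lra.
  have [hy|hy] := ltP (Yf x) de.
    apply: hzero => i j.
    rewrite /H (@hess_local R d E (ECst (d + d) 0) [set y | Yf y < de]) //.
    + exact: open_lt_fun.
    + by move=> y hy'; exact: F_D.
  have [hX|hX] := ltP r'2 (Xf x).
    apply: hzero => i j.
    rewrite /H (@hess_local R d E (ECst (d + d) 0) [set y | r'2 < Xf y]) //.
    + exact: open_gt_fun.
    + by move=> y hy'; exact: F_out.
  have hin : x \in (Cann d r r' `\` Dset d eps).
    apply/mem_set; split.
      rewrite /Cann /=; apply/andP; split; rewrite /r /r' enormX ler_sqrt //;
        try (rewrite -/Xf; lra); exact: EX_ge0.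
    rewrite /Dset /= enormY => h.
    have h1 : Num.sqrt de <= Num.sqrt (sem (EY R d) x) by rewrite ler_sqrt; [exact: hy | exact: EY_ge0].
    have h2 : 0 < Num.sqrt de by rewrite sqrtr_gt0.
    move: h; rewrite /eps; lra.
  rewrite /b hin (_ : (true%:R : R) = 1) // mulr1.
  have hbb := @box_bound R (d + d) w (fun i j => H x i j) L (hHb x hX); rewrite -/W in hbb.
  have : c2 * W = L * (d + d)%:R * W + W by rewrite /c2; ring.
  lra.
Qed.
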